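(* Let $\mathbb{T}=\mathbb{R}/(2\pi\mathbb{Z})$, let $g\in\mathcal{P}(\mathbb{R})$ have finite first moment, and let $m(\mathrm{d}x)=\frac{1}{2\pi}\mathrm{d}x$ be the uniform probability measure on $\mathbb{T}$. For all $\kappa\ge 0$ and all $\beta,\sigma>0$, the product measure $m\otimes g\in\mathcal{P}(\mathbb{T}\times\mathbb{R})$ is a stationary MFG equilibrium with intrinsic frequency distribution $g$.
   Context: For $x\in\mathbb{T}$ and $\mu\in\mathcal{P}(\mathbb{T}\times\mathbb{R})$ set $c(x,\mu):=\int_{\mathbb{T}\times\mathbb{R}}2\sin^2\big(\frac{x-y}{2}\big)\mu(\mathrm{d}y,\mathrm{d}\omega)$. Fix a filtered probability space $(\Omega,\mathbb{F},\mathbb{P})$ satisfying the usual conditions and supporting an $\mathbb{F}$-Brownian motion $B$, such that for every $\nu_0\in\mathcal{P}(\mathbb{T})$ there is an $\mathcal{F}_0$-measurable $\mathbb{T}$-valued random variable with law $\nu_0$. Let $\mathcal{A}$ be the set of square-integrable $\mathbb{F}$-progressively measurable real processes $\alpha$ on $[0,\infty)$. For a flow $(\mu_t)_{t\ge0}\subset\mathcal{P}(\mathbb{T}\times\mathbb{R})$ whose second marginal is $g$ for every $t$, write (disintegration) $\mu_t(\mathrm{d}x,\mathrm{d}\omega)=\mu^\omega_t(\mathrm{d}x)g(\mathrm{d}\omega)$. For $\omega\in\mathbb{R}$ and $\alpha\in\mathcal{A}$, let $X^{\omega,\alpha}_t=X^\omega_0+\int_0^t\alpha_s\mathrm{d}s+\omega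 t+\sigma B_t$ (on $\mathbb{T}$) with $X^\omega_0$ $\mathcal{F}_0$-measurable of law $\mu^\omega_0$, and $J^{\omega,\mu}(\alpha):=\mathbb{E}\int_0^\infty e^{-\beta t}\big[\frac12\alpha_t^2+\kappa c(X^{\omega,\alpha}_t,\mu_t)\big]\mathrm{d}t$. The flow $(\mu_t)$ is a solution of the MFG problem with intrinsic frequency distribution $g$ if (i) the second marginal of every $\mu_t$ is $g$, and (ii) there is a Borel set $E$ with $g(E)=1$ such that for every $\omega\in E$ the disintegration holds with $\mu^\omega_t\in\mathcal{P}(\mathbb{T})$ and there exists $\alpha^\omega_*\in\mathcal{A}$ with $\inf_{\alpha\in\mathcal{A}}J^{\omega,\mu}(\alpha)=J^{\omega,\mu}(\alpha^\omega_* )$ and $\mathcal{L}(X^{\omega,\alpha^\omega_*}_t)=\mu^\omega_t$ for all $t\ge0$. A measure $\mu\in\mathcal{P}(\mathbb{T}\times\mathbb{R})$ is a stationary MFG equilibrium with intrinsic frequency distribution $g$ if the constant flow $\mu_t=\mu$ is such a solution. *)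

(* Defs.v *)
From HB Require Import structures.
From mathcomp Require Import all_boot all_order all_algebra.
From mathcomp Require Import all_classical all_reals all_analysis.
From mathcomp Require Import measurable_realfun lebesgue_measure lebesgue_integral.
Set Implicit Arguments. Unset Strict Implicit. Unset Printing Implicit Defensive.
Import Order.TTheory GRing.Theory Num.Theory.
Import numFieldNormedType.Exports.
Local Open Scope classical_set_scope.
Local Open Scope ring_scope.

Notation Rm R := (measurableTypeR R).

(* The torus T = R/(2 pi Z) is represented by the fundamental domain [0, 2pi);
   a T-valued quantity given by a real number x is identified with tmod x. *)
Definition tmod {R : realType} (x : R) : R :=
  x - (pi *+ 2) * (Num.floor (x / (pi *+ 2)))%:~R.

Definition torus_dom {R : realType} : set (Rm R) := `[0, pi *+ 2[.

(* nu is (the representation on [0,2pi) of) an element of P(T) *)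
Definition is_prob_T {R : realType} (nu : set (Rm R) -> \bar R) : Prop :=
  nu setT = 1%E /\ nu torus_dom = 1%E.

(* mu is (the representation on [0,2pi) x R of) an element of P(T x R) *)
Definition is_prob_TR {R : realType} (mu : set (Rm R * Rm R) -> \bar R) : Prop :=
  mu setT = 1%E /\ mu (torus_dom `*` setT) = 1%E.

Definition cost_c {R : realType} (x : R) (mu : {measure set (Rm R * Rm R) -> \bar R})
  : \bar R :=
  (\int[mu]_(p in setT) (2 * sin ((x - p.1) / 2) ^+ 2)%:E)%E.

Definition halfline {R : realType} : set (Rm R) := `[(0:R), +oo[%classic.

Lemma pi2_gt0 {R : realType} : (0 : R) < pi *+ 2.
Proof. by rewrite pmulrn_lgt0 // pi_gt0. Qed.

Definition unifT {R : realType} : {measure set (Rm R) -> \bar R} :=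
  uniform_prob (@pi2_gt0 R).

Section Stochastic.
Context {R : realType} {d : measure_display} {Omega : measurableType d}.
Variable P : probability Omega R.

Definition measurable_wrt (G : set (set Omega)) (X : Omega -> R) : Prop :=
  forall U : set (Rm R), measurable U -> G (X @^-1` U).

Definition indep_of (G : set (set Omega)) (X : Omega -> R) : Prop :=
  forall (A : set Omega) (U : set (Rm R)), G A -> measurable U ->
    P (A `&` X @^-1` U) = (P A * P (X @^-1` U))%E.

Definition usual_filtration (F : R -> set (set Omega)) : Prop :=
  [/\ forall t, 0 <= t -> sigma_algebra setT (F t) /\ F t `<=` measurable,
      forall s t, 0 <= s -> s <= t -> F s `<=` F t,
      forall N : set Omega, measurable N -> P N = 0%E ->
        forall A, A `<=` N -> F 0 A
    & forall t, 0 <= t -> forall A, (forall s, t < s -> F s A) -> F t A].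

Definition F_brownian (F : R -> set (set Omega)) (B : R -> Omega -> R) : Prop :=
  [/\ forall t, 0 <= t -> measurable_wrt (F t) (B t),
      {ae P, forall w, B 0 w = 0 /\ {within (halfline : set R), continuous (fun t => B t w)}}
    & forall s t, 0 <= s -> s < t ->
        indep_of (F s) (fun w => B t w - B s w) /\
        forall U : set (Rm R), measurable U ->
          P ((fun w => B t w - B s w) @^-1` U) = normal_prob 0 (Num.sqrt (t - s)) U].

Definition law_T (X : Omega -> R) (nu : set (Rm R) -> \bar R) : Prop :=
  forall U : set (Rm R), measurable U -> P ((fun w => tmod (X w)) @^-1` U) = nu U.

Definition prog_measurable (F : R -> set (set Omega)) (a : R -> Omega -> R) : Prop :=
  forall t : R, 0 <= t -> forall U : set (Rm R), measurable U ->
    let I : set (Rm R) := `[0, t]%classic in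
    <<s I `*` [set: Omega],
        [set C : set (Rm R * Omega) | exists (A : set (Rm R)) (Bs : set Omega),
           [/\ measurable A, A `<=` I, F t Bs & C = A `*` Bs]] >>
      ((I `*` [set: Omega]) `&` [set p | U (a p.1 p.2)]).

Definition admissible (F : R -> set (set Omega)) (a : R -> Omega -> R) : Prop :=
  prog_measurable F a /\
  (\int[P]_(w in setT) \int[lebesgue_measure]_(s in halfline)
      ((a s w) ^+ 2)%:E < +oo)%E.

Definition state (sigma : R) (B : R -> Omega -> R) (X0 : Omega -> R)
  (om : R) (a : R -> Omega -> R) : R -> Omega -> R :=
  fun t w => X0 w + Rintegral lebesgue_measure (`[0, t]%classic : set (Rm R)) (fun s => a s w)
             + om * t + sigma * B t w.

Definition cost_J (beta kappa sigma : R) (B : R -> Omega -> R) (X0 : Omega -> R)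
  (om : R) (mu : R -> {measure set (Rm R * Rm R) -> \bar R}) (a : R -> Omega -> R)
  : \bar R :=
  (\int[P]_(w in setT) \int[lebesgue_measure]_(t in halfline)
     ((expR (- (beta * t)))%:E *
      (((a t w) ^+ 2 / 2)%:E
       + kappa%:E * cost_c (state sigma B X0 om a t w) (mu t))))%E.

Definition MFG_solution (F : R -> set (set Omega)) (B : R -> Omega -> R)
  (beta kappa sigma : R) (g : {measure set (Rm R) -> \bar R})
  (mu : R -> {measure set (Rm R * Rm R) -> \bar R}) : Prop :=
  (forall t, 0 <= t -> is_prob_TR (mu t) /\
     forall Bs : set (Rm R), measurable Bs -> mu t (setT `*` Bs) = g Bs) /\
  exists (mw : R -> R -> {measure set (Rm R) -> \bar R}) (E : set (Rm R)),
    [/\ measurable E, g E = 1%E,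
        forall t, 0 <= t -> forall A : set (Rm R), measurable A ->
          measurable_fun [set: Rm R] (fun om : Rm R => mw t om A) /\
          forall Bs : set (Rm R), measurable Bs ->
            mu t (A `*` Bs) = (\int[g]_(om in Bs) mw t om A)%E
      & forall om, E om ->
          (forall t, 0 <= t -> is_prob_T (mw t om)) /\
          forall X0 : Omega -> R, measurable_wrt (F 0) X0 ->
            (forall w, torus_dom (X0 w)) -> law_T X0 (mw 0 om) ->
            exists astar : R -> Omega -> R,
              [/\ admissible F astar,
                  ereal_inf [set cost_J beta kappa sigma B X0 om mu a
                            | a in admissible F]
                    = cost_J beta kappa sigma B X0 om mu astar
                & forall t, 0 <= t ->
                    law_T (state sigma B X0 om astar t) (mw t om)]].

Definition stationary_MFG_equilibrium (F : R -> set (set Omega))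
  (B : R -> Omega -> R) (beta kappa sigma : R) (g : {measure set (Rm R) -> \bar R})
  (mu : {measure set (Rm R * Rm R) -> \bar R}) : Prop :=
  MFG_solution F B beta kappa sigma g (fun _ => mu).

End Stochastic.

Definition rich_F0 {R : realType} {d : measure_display} {Omega : measurableType d}
  (P : probability Omega R) (F : R -> set (set Omega)) : Prop :=
  forall nu0 : {measure set (Rm R) -> \bar R}, is_prob_T nu0 ->
    exists X0 : Omega -> R, [/\ measurable_wrt (F 0) X0,
      forall w, torus_dom (X0 w) & law_T P X0 nu0].

(* Main.v *)
Require Import Defs.
From HB Require Import structures.
From mathcomp Require Import all_boot all_order all_algebra.
From mathcomp Require Import all_classical all_reals all_analysis.
From mathcomp Require Import measurable_realfun lebesgue_measure lebesgue_integral.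
From mathcomp Require Import ring lra.
Import Order.TTheory GRing.Theory Num.Theory.
Local Open Scope classical_set_scope.
Local Open Scope ring_scope.

Module Helpers.
Set Implicit Arguments. Unset Strict Implicit. Unset Printing Implicit Defensive.
Import numFieldNormedType.Exports.


Section tmod.
Context {R : realType}.
Local Notation p2 := (pi *+ 2 : R).

Lemma p2_gt0 : 0 < p2. Proof. exact: pi2_gt0. Qed.

Lemma tmod_itv (x : R) : 0 <= tmod x < p2.
Proof.
have hp := p2_gt0.
have /andP[h1 h2] := floor_itv (x / p2).
rewrite /tmod; set f := ((Num.floor (x / p2))%:~R : R).
rewrite intrD in h2; rewrite -/f in h1 h2.
rewrite ler_pdivlMr // in h1.
rewrite ltr_pdivrMr // in h2.
apply/andP; split; lra.
Qed.

Lemma tmod_id (x : R) : 0 <= x < p2 -> tmod x = x.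
Proof.
move=> /andP[h1 h2]; have hp := p2_gt0.
rewrite /tmod (_ : Num.floor (x / p2) = 0) ?mulr0 ?subr0//.
apply: floor_def; rewrite add0r /=; apply/andP; split.
  by rewrite divr_ge0 // ltW.
by rewrite ltr_pdivrMr // mul1r.
Qed.

Lemma tmod_shift (x : R) (k : int) : tmod (x + p2 * k%:~R) = tmod x.
Proof.
have hp := p2_gt0; rewrite /tmod.
have -> : (x + p2 * k%:~R) / p2 = x / p2 + k%:~R.
  by rewrite mulrDl [_ * _ / _]mulrC mulrA mulVf ?mul1r // gt_eqF.
rewrite floorDrz ?intr_int //.
by rewrite intrKfloor intrD; ring.
Qed.

Lemma tmod_tmod (x w : R) : tmod (x + tmod w) = tmod (x + w).
Proof.
have -> : x + tmod w = (x + w) + p2 * (- Num.floor (w / p2))%:~R.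
  by rewrite /tmod intrN; ring.
by rewrite tmod_shift.
Qed.

Lemma measurable_tmod : measurable_fun setT (@tmod R).
Proof.
rewrite /tmod; apply: measurable_funB => //.
apply: nondecreasing_measurable => // x y xy.
by rewrite ler_pM2l ?p2_gt0 // ler_int le_floor // ler_pM2r // invr_gt0 p2_gt0.
Qed.

End tmod.


Section pfw.
Local Open Scope ereal_scope.
Context d1 d2 (T1 : measurableType d1) (T2 : measurableType d2) (R : realType).
Variables (m : {measure set T1 -> \bar R}) (f : T1 -> T2).
Variable mf : measurable_fun [set: T1] f.

Definition pfw (mf' : measurable_fun [set: T1] f) := pushforward m f.

Let pfw0 : pfw mf set0 = 0.
Proof. by rewrite /pfw /pushforward preimage_set0 measure0. Qed.

Let pfw_ge0 A : 0 <= pfw mf A.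
Proof. exact: measure_ge0. Qed.

Let pfw_sigma_additive : semi_sigma_additive (pfw mf).
Proof.
move=> F mF tF mUF; rewrite /pfw /pushforward preimage_bigcup.
apply: measure_semi_sigma_additive.
- by move=> n; rewrite -[X in measurable X]setTI; exact: mf.
- apply/trivIsetP => /= i j _ _ ij; rewrite -preimage_setI.
  by move/trivIsetP : tF => /(_ _ _ _ _ ij) ->//; rewrite preimage_set0.
- by rewrite -preimage_bigcup -[X in measurable X]setTI; exact: mf.
Qed.

HB.instance Definition _ := isMeasure.Build _ _ _
  (pfw mf) pfw0 pfw_ge0 pfw_sigma_additive.
End pfw.

Section shift.
Context {R : realType}.
Local Notation mu := (@lebesgue_measure R).

Lemma measurable_shiftR (c : R) : measurable_fun [set: Rm R] (fun x : Rm R => x + c).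
Proof. exact: measurable_funD. Qed.

Lemma lebesgue_shift (c : R) (A : set (Rm R)) : measurable A ->
  mu [set x | A (x + c)] = mu A.
Proof.
move=> mA.
have := @lebesgue_measure_unique R (@pfw _ _ (Rm R) (Rm R) R mu _ (measurable_shiftR c)) _ A mA.
move=> h; rewrite h //.
move=> X /ocitvP[->|[[a b] /= ab ->]].
  by rewrite !measure0.
rewrite /pfw /pushforward.
have -> : (fun x : Rm R => x + c) @^-1` `]a, b] = `]a - c, b - c]%classic.
  apply/seteqP; split => x /=; rewrite !in_itv /= => /andP[h1 h2]; apply/andP; split; lra.
rewrite !lebesgue_measure_itv /= !lte_fin ltrBlDr subrK ab.
by rewrite -!EFinD; congr (_%:E); ring.
Qed.
End shift.


Section unif.
Context {R : realType}.
Local Notation p2 := (pi *+ 2 : R).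
Local Notation lam := (@lebesgue_measure R).

Lemma lam_cc_co (A : set (Rm R)) (a b : R) : measurable A ->
  lam (A `&` `[a, b]) = lam (A `&` `[a, b[).
Proof.
move=> mA.
have s1 : A `&` `[a, b[ `<=` A `&` `[a, b].
  by apply: setIS => x /=; rewrite !in_itv /= => /andP[-> /ltW ->].
have s2 : A `&` `[a, b] `<=` (A `&` `[a, b[) `|` [set b].
  move=> x [Ax]; rewrite /= !in_itv /= => /andP[ax xb].
  have [xb'|xb'] := ltP x b; first by left; split => //=; rewrite ax.
  by right; apply/le_anti; rewrite xb xb'.
apply/le_anti/andP; split; last first.
  by apply: le_measure => //; rewrite inE; apply: measurableI.
apply: (@le_trans _ _ (lam ((A `&` `[a, b[) `|` [set b]))).
  apply: le_measure => //; rewrite inE.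
    by apply: measurableI.
  by apply: measurableU => //; apply: measurableI.
apply: le_trans; first apply: measureU2 => //; first exact: measurableI.
have h0 := @lebesgue_measure_set1 R b.
by rewrite [X in (_ + X <= _)%E]h0 adde0.
Qed.

Lemma unifTE (A : set (Rm R)) : measurable A ->
  unifT A = ((p2^-1)%:E * lam (A `&` torus_dom))%E.
Proof.
move=> mA; rewrite /unifT /= /uniform_prob integral_uniform_pdf.
rewrite (eq_integral (fun=> ((p2 - 0)^-1)%:E)); last first.
  by move=> x; rewrite inE /= => -[_]; rewrite in_itv /uniform_pdf /= => ->.
rewrite integral_cst //=; last exact: measurableI.
by rewrite subr0 lam_cc_co.
Qed.
Lemma tmod_addp2 (y : R) : tmod (y + p2) = tmod y.
Proof. by rewrite -(tmod_shift y 1) mulr1. Qed.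

Lemma measurable_shift_set (c : R) (V : set (Rm R)) : measurable V ->
  measurable [set x : Rm R | V (x + c)].
Proof. by move=> mV; have := measurable_shiftR c measurableT mV; rewrite setTI. Qed.

Lemma lam_tmod_shift (U : set (Rm R)) (w : R) : measurable U ->
  lam ([set x : Rm R | U (tmod (x + w))] `&` torus_dom) = lam (U `&` torus_dom).
Proof.
move=> mU; have hp := @p2_gt0 R.
have /andP[w0 w1] := tmod_itv w; set w' := tmod w in w0 w1 *.
have eqS : [set x : Rm R | U (tmod (x + w))] `&` torus_dom =
  [set x : Rm R | (U `&` `[w', p2[) (x + w')] `|`
  [set x : Rm R | (U `&` `[0, w'[) (x + (w' - p2))].
  apply/seteqP; split => x /=.
    rewrite -tmod_tmod -/w' /torus_dom /= in_itv /= => -[Ux /andP[x0 xp]].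
    have [h|h] := ltP (x + w') p2.
      left; rewrite tmod_id in Ux; last by apply/andP; split; lra.
      by split => //; rewrite /= in_itv /=; apply/andP; split; lra.
    right; have e : x + w' = (x + (w' - p2)) + p2 by ring.
    rewrite e tmod_addp2 tmod_id in Ux; last by apply/andP; split; lra.
    by split => //; rewrite /= in_itv /=; apply/andP; split; lra.
  rewrite /torus_dom /= -tmod_tmod -/w' => -[[Ux]|[Ux]]; rewrite in_itv /= => /andP[h1 h2].
    rewrite tmod_id; last by apply/andP; split; lra.
    by split => //; rewrite in_itv /=; apply/andP; split; lra.
  have e : x + w' = (x + (w' - p2)) + p2 by ring.
  rewrite e tmod_addp2 tmod_id; last by apply/andP; split; lra.
  by split => //; rewrite in_itv /=; apply/andP; split; lra.
have disj : [set x : Rm R | (U `&` `[w', p2[) (x + w')] `&`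
  [set x : Rm R | (U `&` `[0, w'[) (x + (w' - p2))] = set0.
  apply/seteqP; split => x //= [[_]]; rewrite !in_itv /= => /andP[h1 h2] [_].
  by move=> /andP[h3 h4]; lra.
have eqU : U `&` torus_dom = (U `&` `[w', p2[) `|` (U `&` `[0, w'[).
  apply/seteqP; split => x /=; rewrite /torus_dom /=.
    rewrite in_itv /= => -[Ux /andP[x0 xp]].
    have [h|h] := leP w' x.
      by left; split => //; rewrite in_itv /=; apply/andP; split.
    by right; split => //; rewrite in_itv /=; apply/andP; split.
  by move=> [[Ux]|[Ux]]; rewrite !in_itv /= => /andP[h1 h2]; split => //;
    apply/andP; split; lra.
have disjU : (U `&` `[w', p2[) `&` (U `&` `[0, w'[) = set0.
  apply/seteqP; split => x //= [[_]]; rewrite !in_itv /= => /andP[h1 h2] [_].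
  by move=> /andP[h3 h4]; lra.
rewrite eqS measureU //; try (apply: measurable_shift_set; apply: measurableI => //).
have mI1 : measurable (U `&` `[w', p2[) by apply: measurableI.
have mI2 : measurable (U `&` `[0, w'[) by apply: measurableI.
rewrite [X in (X + _)%E](lebesgue_shift _ mI1) [X in (_ + X)%E](lebesgue_shift _ mI2).
by rewrite eqU measureU // addeC.
Qed.
End unif.


Section law.
Context {R : realType}.
Local Notation p2 := (pi *+ 2 : R).
Local Notation lam := (@lebesgue_measure R).

Lemma measurable_tmod_shift (w : R) (U : set (Rm R)) : measurable U ->
  measurable [set x : Rm R | U (tmod (x + w))].
Proof.
move=> mU.
have mf : measurable_fun [set: Rm R] (fun x : Rm R => tmod (x + w)).
  apply: measurableT_comp; first exact: measurable_tmod.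
  exact: measurable_shiftR.
by have := mf measurableT _ mU; rewrite setTI.
Qed.

Lemma unifT_tmod_shift (w : R) (U : set (Rm R)) : measurable U ->
  unifT [set x : Rm R | U (tmod (x + w))] = unifT U.
Proof.
move=> mU; rewrite !unifTE //; last exact: measurable_tmod_shift.
by rewrite lam_tmod_shift.
Qed.

Context d (Omega : measurableType d) (P : probability Omega R).
Variables (X0 Z : Omega -> R).
Hypothesis mX0 : measurable_fun [set: Omega] (X0 : Omega -> Rm R).
Hypothesis mZ : measurable_fun [set: Omega] (Z : Omega -> Rm R).
Variable m2 : probability (Rm R) R.
Hypothesis hind : forall A B : set (Rm R), measurable A -> measurable B ->
  P (Z @^-1` A `&` X0 @^-1` B) = (m2 A * unifT B)%E.

Lemma law_sum (c s : R) (U : set (Rm R)) : measurable U ->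
  P [set w | U (tmod (X0 w + (c + s * Z w)))] = unifT U.
Proof.
move=> mU.
pose U0 := uniform_prob (@pi2_gt0 R).
have mh : measurable_fun [set: Omega] (fun w => ((Z w : Rm R), (X0 w : Rm R))).
  exact: measurable_fun_pair.
have key := @product_measure_unique _ _ (Rm R) (Rm R) R m2 U0 (pfw P mh).
have mS : measurable [set p : Rm R * Rm R | U (tmod (p.2 + (c + s * p.1)))].
  have mf : measurable_fun [set: Rm R * Rm R]
      (fun p : Rm R * Rm R => tmod (p.2 + (c + s * p.1))).
    apply: measurableT_comp; first exact: measurable_tmod.
    apply: measurable_funD => //; apply: measurable_funD => //.
    by apply: measurable_funM => //.
  by have := mf measurableT _ mU; rewrite setTI.
have := key _ _ mS.
rewrite /pfw /pushforward /= => <-.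
  rewrite /product_measure1 /=.
  rewrite (eq_integral (fun=> unifT U)); last first.
    move=> z _ /=; rewrite /xsection /=.
    rewrite (_ : [set y | _] = [set y : Rm R | U (tmod (y + (c + s * z)))]).
      exact: (unifT_tmod_shift _ mU).
    by apply/seteqP; split => y /=; rewrite inE.
  have h1 := probability_setT m2.
  by rewrite integral_cst // [X in (_ * X)%E]h1 mule1.
by move=> A B mA mB; rewrite /pfw /pushforward; exact: hind.
Qed.
End law.


Section ftc.
Context {R : realType}.
Local Notation p2 := (pi *+ 2 : R).
Local Notation lam := (@lebesgue_measure R).

Lemma cont_cosx (x : R) : continuous (fun z : R => 1 - cos (x - z)).
Proof.
have dsub (y : R) : is_derive y 1 (fun z : R => x - z) (-1).
  have h := @is_deriveB R R^o R^o (cst x) id y 1 0 1 (is_derive_cst _ _ _) (is_derive_id _ _).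
  have e : (cst x - id) = (fun z : R => x - z) by apply/funext.
  by rewrite e sub0r in h.
have dcos (y : R) : is_derive y 1 (fun z => cos (x - z)) (sin (x - y)).
  have h := @is_derive1_comp R cos (fun z => x - z) y _ _ (is_derive_cos (x - y)) (dsub y).
  by rewrite mulrN1 opprK in h.
pose f := fun z : R => 1 - cos (x - z).
have df (y : R) : is_derive y 1 f (0 - sin (x - y)).
  have h := @is_deriveB R R^o R^o (cst 1) (fun z => cos (x - z)) y 1 0 _ (is_derive_cst _ _ _) (dcos y).
  have e : (cst 1 - (fun z => cos (x - z))) = f by apply/funext.
  by rewrite e in h.
by move=> y; apply: differentiable_continuous; apply/derivable1_diffP; case: (df y).
Qed.

Lemma int_cos (x : R) :
  (\int[lam]_(y in `[0%R, p2]) (1 - cos (x - y))%:E = p2%:E)%E.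
Proof.
have dsub (y : R) : is_derive y 1 (fun z : R => x - z) (-1).
  have h := @is_deriveB R R^o R^o (cst x) id y 1 0 1 (is_derive_cst _ _ _) (is_derive_id _ _).
  have e : (cst x - id) = (fun z : R => x - z) by apply/funext.
  by rewrite e sub0r in h.
have dcos (y : R) : is_derive y 1 (fun z => cos (x - z)) (sin (x - y)).
  have h := @is_derive1_comp R cos (fun z => x - z) y _ _ (is_derive_cos (x - y)) (dsub y).
  by rewrite mulrN1 opprK in h.
have dsin (y : R) : is_derive y 1 (fun z => sin (x - z)) (- cos (x - y)).
  have h := @is_derive1_comp R sin (fun z => x - z) y _ _ (is_derive_sin (x - y)) (dsub y).
  by rewrite mulrN1 in h.
pose F := fun z : R => z + sin (x - z).
have dF (y : R) : is_derive y 1 F (1 - cos (x - y)).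
  have h := @is_deriveD R R^o R^o id (fun z => sin (x - z)) y 1 1 _ (is_derive_id _ _) (dsin y).
  have e : (id + (fun z => sin (x - z))) = F by apply/funext.
  by rewrite e in h.
pose f := fun z : R => 1 - cos (x - z).
have df (y : R) : is_derive y 1 f (0 - sin (x - y)).
  have h := @is_deriveB R R^o R^o (cst 1) (fun z => cos (x - z)) y 1 0 _ (is_derive_cst _ _ _) (dcos y).
  have e : (cst 1 - (fun z => cos (x - z))) = f by apply/funext.
  by rewrite e in h.
have cF : continuous F.
  by move=> y; apply: differentiable_continuous; apply/derivable1_diffP; case: (dF y).
have cf : continuous f.
  by move=> y; apply: differentiable_continuous; apply/derivable1_diffP; case: (df y).
rewrite (@continuous_FTC2 _ f F 0 p2 p2_gt0).
- congr (_%:E).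
  have e1 : sin (x - p2) = sin x by rewrite sinB sin2pi cos2pi mulr0 subr0 mulr1.
  have e2 : sin (x - 0) = sin x by rewrite subr0.
  rewrite /F; lra.
- exact: continuous_subspaceT.
- split.
  + by move=> y _; case: (dF y).
  + exact: cvg_at_right_filter (cF 0).
  + exact: cvg_at_left_filter (cF p2).
- by move=> y _; rewrite derive1E; case: (dF y).
Qed.
End ftc.


Section cost.
Context {R : realType}.
Local Notation p2 := (pi *+ 2 : R).
Local Notation lam := (@lebesgue_measure R).

Lemma sin2_cos (u : R) : 2 * sin (u / 2) ^+ 2 = 1 - cos u.
Proof.
set v := u / 2.
have e : u = v + v by rewrite /v -splitr.
rewrite [in RHS]e cosD.
have := cos2sin2 v; rewrite !expr2 => hc; lra.
Qed.

Lemma cost_c1 (g : probability (Rm R) R) (x : R) : cost_c x (unifT \x g)%E = 1%:E.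
Proof.
pose U0 := uniform_prob (@pi2_gt0 R).
rewrite /cost_c.
pose f := fun p : Rm R * Rm R => (1 - cos (x - p.1))%:E.
transitivity (\int[U0 \x g]_z f z)%E.
  by apply: eq_integral => p _; rewrite /f sin2_cos.
have mh : measurable_fun [set: Rm R] (fun z : Rm R => 1 - cos (x - z)).
  move=> mD Y mY; have := @continuous_measurable_fun R _ (@cont_cosx R x) mD Y mY; exact.
have mf : measurable_fun [set: Rm R * Rm R] f.
  apply/measurable_EFinP.
  exact: (measurableT_comp mh (@measurable_fst _ _ (Rm R) (Rm R))).
have h0 (z : R) : 0 <= 1 - cos (x - z) by rewrite subr_ge0 cos_le1.
have f0 p : (0 <= f p)%E by rewrite lee_fin h0.
rewrite (fubini_tonelli1 f mf f0) /fubini_F /=.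
rewrite (eq_integral (fun z : Rm R => (1 - cos (x - z))%:E)); last first.
  move=> z _; rewrite /f /= integral_cst //.
  by have h1 := probability_setT g; rewrite [X in (_ * X)%E]h1 mule1.
rewrite integral_uniform //; last exact/measurable_EFinP.
rewrite int_cos subr0 -EFinM mulVf //.
by rewrite gt_eqF // p2_gt0.
Qed.
End cost.


Section misc.
Local Open Scope ereal_scope.

Lemma le_integral_nm d (T : measurableType d) (R : realType)
  (mu : {measure set T -> \bar R}) (D : set T) (f1 f2 : T -> \bar R) :
  (forall x, D x -> 0 <= f1 x) -> (forall x, D x -> f1 x <= f2 x) ->
  \int[mu]_(x in D) f1 x <= \int[mu]_(x in D) f2 x.
Proof.
move=> f10 f12.
have f20 x : D x -> 0 <= f2 x by move=> Dx; exact: le_trans (f10 _ Dx) (f12 _ Dx).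
rewrite (ge0_integralE _ f10) (ge0_integralE _ f20) /=.
apply: ge_ereal_sup => _ [h hf <-]; apply: ereal_sup_ubound; exists h => // x.
apply: le_trans (hf x) _; rewrite /patch; case: ifPn => // /set_mem Dx; exact: f12.
Qed.

Lemma P_eq_null d (Omega : measurableType d) (R : realType) (P : probability Omega R)
  (S1 S2 N : set Omega) :
  measurable S1 -> measurable S2 -> measurable N -> P N = 0 ->
  (forall w, ~ N w -> S1 w -> S2 w) -> (forall w, ~ N w -> S2 w -> S1 w) ->
  P S1 = P S2.
Proof.
move=> m1 m2 mN PN h12 h21.
have key (A B : set Omega) : measurable A -> measurable B ->
    (forall w, ~ N w -> A w -> B w) -> P A <= P B.
  move=> mA mB hAB.
  apply: (@le_trans _ _ (P (B `|` N))).
    apply: le_measure; rewrite ?inE //; first exact: measurableU.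
    by move=> w Aw; have [Nw|Nw] := pselect (N w); [right|left; exact: hAB].
  apply: le_trans; first exact: measureU2.
  by rewrite [X in _ + X]PN adde0.
by apply/le_anti; rewrite !key.
Qed.
End misc.

End Helpers.
Import Helpers.

Theorem lemma2p1 (R : realType) (d : measure_display) (Omega : measurableType d)
  (P : probability Omega R) (F : R -> set (set Omega)) (B : R -> Omega -> R)
  (g : probability (Rm R) R) (kappa beta sigma : R) :
  usual_filtration P F -> F_brownian P F B -> rich_F0 P F ->
  (\int[g]_(om in setT) (`|om|)%:E < +oo)%E ->
  0 <= kappa -> 0 < beta -> 0 < sigma ->
  stationary_MFG_equilibrium P F B beta kappa sigma g (unifT \x g)%E.
Proof.
move=> hF hB hrich hg hk hb hs.
have [hFsig hFmono hFcompl hFrc] := hF.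
have [hBm hBae hBinc] := hB.
have Fm t : 0 <= t -> F t `<=` measurable by move=> t0; case: (hFsig t t0).
have unif1 : unifT [set: Rm R] = 1%E := probability_setT (uniform_prob (@pi2_gt0 R)).
have g1 : g [set: Rm R] = 1%E := probability_setT g.
have mdom : measurable (torus_dom : set (Rm R)) by exact: measurable_itv.
have unifdom : unifT (torus_dom : set (Rm R)) = 1%E.
  rewrite (unifTE mdom) setIid /torus_dom lebesgue_measure_itv /= lte_fin p2_gt0.
  by rewrite oppr0 adde0 -EFinM mulVf // gt_eqF // p2_gt0.
have pE (A Bs : set (Rm R)) : measurable A -> measurable Bs ->
    (unifT \x g)%E (A `*` Bs) = (unifT A * g Bs)%E.
  by move=> mA mBs; rewrite product_measure1E.
rewrite /stationary_MFG_equilibrium /MFG_solution; split.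
  move=> t t0; split; [split|].
  - rewrite -setXTT; apply: (eq_trans (pE _ _ measurableT measurableT)).
    by rewrite unif1 g1 mule1.
  - apply: (eq_trans (pE _ _ mdom measurableT)).
    by rewrite unifdom g1 mule1.
  - move=> Bs mBs; apply: (eq_trans (pE _ _ measurableT mBs)).
    by rewrite unif1 mul1e.
exists (fun _ _ => unifT), setT; split => //.
- move=> t t0 A mA; split; first exact: measurable_cst.
  move=> Bs mBs; apply: (eq_trans (pE _ _ mA mBs)).
  by rewrite integral_cst.
move=> om _; split; first by move=> t t0; split.
move=> X0 hX0 hX0dom hlaw.
have FT t : 0 <= t -> F t [set: Omega].
  move=> t0; have [[h0 hC _] _] := hFsig t t0.
  by have := hC _ h0; rewrite setD0.
have adm0 : admissible P F (fun _ _ => 0).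
  split.
    move=> t t0 U mU /=.
    have [hU|hU] := pselect (U 0).
      have -> : (`[0, t] `*` [set: Omega]) `&` [set p | U 0] = `[0, t] `*` [set: Omega].
        by apply/seteqP; split => p; [case|move=> hp; split].
      apply: (@sub_sigma_algebra _ (`[0, t] `*` [set: Omega])).
      exists `[0, t]%classic, [set: Omega]; split => //.
      exact: FT.
    have -> : (`[0, t] `*` [set: Omega]) `&` [set p | U 0] = set0.
      by apply/seteqP; split => p //= [].
    exact: sigma_algebra0.
  rewrite (eq_integral (fun _ => 0%E)); first by rewrite integral0.
  move=> w _; rewrite (eq_integral (fun _ => 0%E)); first by rewrite integral0.
  by move=> s _; rewrite expr0n.
have Jeq a : cost_J P beta kappa sigma B X0 om (fun _ => (unifT \x g)%E) a =
    (\int[P]_(w in setT) \int[lebesgue_measure]_(t in halfline)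
      ((expR (- (beta * t)))%:E * (((a t w) ^+ 2 / 2)%:E + kappa%:E)))%E.
  rewrite /cost_J; apply: eq_integral => w _; apply: eq_integral => t _.
  by rewrite cost_c1 mule1.
have e0 (t : R) : 0 <= expR (- (beta * t)) by exact: expR_ge0.
exists (fun _ _ => 0); split => //.
  apply/le_anti/andP; split.
    by apply: ereal_inf_lbound; exists (fun _ _ => 0).
  apply: le_ereal_inf_tmp => _ [a adma <-].
  rewrite !Jeq; apply: le_integral_nm.
    move=> w _; apply: integral_ge0 => t _.
    by rewrite -EFinD -EFinM lee_fin mulr_ge0 // expr0n /= mul0r add0r.
  move=> w _; apply: le_integral_nm.
    by move=> t _; rewrite -EFinD -EFinM lee_fin mulr_ge0 // expr0n /= mul0r add0r.
  move=> t _; rewrite -!EFinD -!EFinM lee_fin ler_wpM2l // lerD2r expr0n /= mul0r.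
  by rewrite divr_ge0 // sqr_ge0.
move=> t t0 U mU.
have mBt s : 0 <= s -> measurable_fun [set: Omega] (B s : Omega -> Rm R).
  by move=> s0 _ Y mY; rewrite setTI; apply: (Fm s s0); exact: hBm s s0 _ mY.
have mX0 : measurable_fun [set: Omega] (X0 : Omega -> Rm R).
  by move=> _ Y mY; rewrite setTI; apply: (Fm 0 (lexx 0)); exact: hX0 _ mY.
have X0id : (fun w => tmod (X0 w)) = X0.
  apply/funext => w; apply: tmod_id; have := hX0dom w.
  by rewrite /torus_dom /= in_itv.
have lawX0 A : measurable A -> P (X0 @^-1` A) = unifT A.
  by move=> mA; rewrite -[in LHS]X0id; exact: hlaw.
pose Z := fun w => B t w - B 0 w.
have mZ : measurable_fun [set: Omega] (Z : Omega -> Rm R).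
  exact: measurable_funB (mBt t t0) (mBt 0 (lexx 0)).
have S2E : P [set w | U (tmod (X0 w + (om * t + sigma * Z w)))] = unifT U.
  have [t00|tpos] := eqVneq t 0.
    have -> : [set w | U (tmod (X0 w + (om * t + sigma * Z w)))] =
        (fun w => tmod (X0 w)) @^-1` U.
      by apply/seteqP; split => w /=; rewrite /Z t00 subrr mulr0 mulr0 addr0 addr0.
    exact: hlaw.
  have tp : 0 < t by rewrite lt_neqAle eq_sym tpos t0.
  have [hind hlawZ] := hBinc 0 t (lexx 0) tp.
  have hind2 : forall A Bs : set (Rm R), measurable A -> measurable Bs ->
      P (Z @^-1` A `&` X0 @^-1` Bs) = (normal_prob 0 (Num.sqrt (t - 0)) A * unifT Bs)%E.
    move=> A Bs mA mBs; rewrite setIC hind //; last exact: hX0.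
    by rewrite lawX0 // hlawZ // muleC.
  exact: (@law_sum R d Omega P X0 Z mX0 mZ (normal_prob 0 (Num.sqrt (t - 0))) hind2 (om * t) sigma U mU).
have Rint0 : Rintegral lebesgue_measure (`[0, t]%classic : set (Rm R)) (fun _ => 0) = 0.
  by rewrite /Rintegral integral0.
have es : (fun w => tmod (state sigma B X0 om (fun _ _ => 0) t w)) =
    (fun w => tmod (X0 w + (om * t + sigma * B t w))).
  by apply/funext => w; rewrite /state Rint0 addr0 addrA.
rewrite /= es.
have [N [mN PN sN]] := hBae.
apply: eq_trans S2E.
apply: (P_eq_null _ _ mN PN).
- have mf : measurable_fun [set: Omega] (fun w => tmod (X0 w + (om * t + sigma * B t w))).
    apply: measurableT_comp; first exact: measurable_tmod.
    apply: measurable_funD => //; apply: measurable_funD => //.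
    by apply: measurable_funM => //; exact: mBt.
  by have := mf measurableT _ mU; rewrite setTI.
- have mf : measurable_fun [set: Omega] (fun w => tmod (X0 w + (om * t + sigma * Z w))).
    apply: measurableT_comp; first exact: measurable_tmod.
    apply: measurable_funD => //; apply: measurable_funD => //.
    by apply: measurable_funM => //.
  by have := mf measurableT _ mU; rewrite setTI.
- move=> w Nw; have hw : B 0 w = 0.
    case: (pselect (B 0 w = 0)) => // hn; exfalso; apply: Nw; apply: sN => /= -[h _].
    exact: hn h.
  by rewrite /= /Z hw subr0.
- move=> w Nw; have hw : B 0 w = 0.
    case: (pselect (B 0 w = 0)) => // hn; exfalso; apply: Nw; apply: sN => /= -[h _].
    exact: hn h.
  by rewrite /= /Z hw subr0.
Qed.
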